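(* Let $S=\langle P,\varphi\rangle$ be a SUT model, $t$ a strength and $N\ge1$ an integer. The optimal cost of the Partial MaxSAT instance $TPMSat_{CCX}^{N,t,S}$ (defined in the context) is $|\mathcal T_a|-T(N;t,S)$.
   Context: A SUT model is $S=\langle P,\varphi\rangle$, where $P$ is a finite set of parameters, each $p\in P$ having a finite nonempty domain $d(p)$, and $\varphi$ is a propositional formula whose atoms have the form $(p=v)$ with $p\in P$, $v\in d(p)$. A test case is a full assignment $A$ giving each $p$ a value in $d(p)$ such that $\varphi$ is true when each atom $(p=v)$ is read as true iff $A(p)=v$; it is assumed that at least one test case exists. Fix a strength $t$ with $1\le t\le|P|$. A $t$-tuple is an assignment of values to exactly $t$ distinct parameters, viewed as a set of pairs $(p,v)$; a test case covers $\tau$ if it assigns $v$ to $p$ for every $(p,v)\in\tau$. A $t$-tuple is allowed if some test case covers it; $\mathcal T_a$ is the set of allowed $t$-tuples. The Tuple Number $T(N;t,S)$ is the maximum number of $t$-tuples covered (each by at least one member) by a list of $N$ test cases. $[N]=\{1,\dots,N\}$. A Partial MaxSAT instance consists of hard constraints and soft clauses $(c,w)$ with positive integer weights; its optimal cost is the minimum, over truth assignments satisfying all hard constraints, of the total weight of falsified soft clauses ($\infty$ if the hard constraints are unsatisfiable). Variables: $x_{i,p,v}$ ($i\in[N]$, $p\in P$, $v\in d(p)$), $c^i_\tau$ ($i\in\{0,\dots,N\}$, $\tau\in\mathcal T_a$). Hard constraints of $TPMSat_{CCX}^{N,t,S}$: (X) for every $i\in[N]$, $p\in P$: exactly one of $\{x_{i,p,v}:v\in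 d(p)\}$ is true; (SUTX) for every $i\in[N]$: the formula obtained from $\varphi$ by replacing each atom $(p=v)$ with $x_{i,p,v}$; (a) for every $i\in[N]$, $\tau\in\mathcal T_a$, $(p,v)\in\tau$: $c^i_\tau\rightarrow(c^{i-1}_\tau\vee x_{i,p,v})$; (c) for every $\tau\in\mathcal T_a$: $c^N_\tau\rightarrow\neg c^0_\tau$. Soft clauses: $(c^N_\tau,1)$ for every $\tau\in\mathcal T_a$. *)

(* Defs.v *)
From HB Require Import structures.
From mathcomp Require Import all_boot.

Set Implicit Arguments.
Unset Strict Implicit.
Unset Printing Implicit Defensive.

Inductive form (A : Type) : Type :=
  | FVar of A
  | FTop
  | FBot
  | FNot of form A
  | FAnd of form A & form A
  | FOr of form A & form A
  | FImp of form A & form A.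

Arguments FTop {A}.
Arguments FBot {A}.

Fixpoint eval (A : Type) (val : A -> bool) (f : form A) : bool :=
  match f with
  | FVar a => val a
  | FTop => true
  | FBot => false
  | FNot g => ~~ eval val g
  | FAnd g h => eval val g && eval val h
  | FOr g h => eval val g || eval val h
  | FImp g h => eval val g ==> eval val h
  end.

Fixpoint fmap (A B : Type) (s : A -> B) (f : form A) : form B :=
  match f with
  | FVar a => FVar (s a)
  | FTop => FTop
  | FBot => FBot
  | FNot g => FNot (fmap s g)
  | FAnd g h => FAnd (fmap s g) (fmap s h)
  | FOr g h => FOr (fmap s g) (fmap s h)
  | FImp g h => FImp (fmap s g) (fmap s h)
  end.

Definition bigOr (A : Type) (s : seq (form A)) : form A := foldr (@FOr A) FBot s.
Definition bigAnd (A : Type) (s : seq (form A)) : form A := foldr (@FAnd A) FTop s.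

Fixpoint at_most_one (A : Type) (s : seq A) : form A :=
  match s with
  | [::] => FTop
  | a :: s' => FAnd (bigAnd [seq FNot (FAnd (FVar a) (FVar b)) | b <- s'])
                    (at_most_one s')
  end.

Definition exactly_one (A : Type) (s : seq A) : form A :=
  FAnd (bigOr [seq FVar a | a <- s]) (at_most_one s).

Record pmaxsat (V : Type) := PMaxSat {
  hard : seq (form V);
  soft : seq (form V * nat)  (* (clause, positive weight) *)
}.

Definition sat_hard (V : Type) (I : pmaxsat V) (val : V -> bool) : bool :=
  all (eval val) (hard I).

Definition soft_cost (V : Type) (I : pmaxsat V) (val : V -> bool) : nat :=
  \sum_(cw <- soft I | ~~ eval val cw.1) cw.2.

Definition is_opt_cost (V : Type) (I : pmaxsat V) (k : nat) : Prop :=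
  (exists val : V -> bool, sat_hard I val /\ soft_cost I val = k) /\
  (forall val : V -> bool, sat_hard I val -> k <= soft_cost I val).

(* SUT models: parameters P (finite), domains D p (finite), formula phi *)
(* over atoms (p = v), an atom being a dependent pair (p ; v).          *)
Section SUT.
Variables (P : finType) (D : P -> finType).

Definition atom := {p : P & D p}.
Definition assignment := {dffun forall p : P, D p}.

Definition atom_true (A : assignment) (a : atom) : bool := A (tag a) == tagged a.

Definition test_case (phi : form atom) (A : assignment) : bool :=
  eval (atom_true A) phi.

Definition is_ttuple (t : nat) (tau : {set atom}) : bool :=
  (#|tau| == t) &&
  [forall a in tau, forall b in tau, (tag a == tag b) ==> (a == b)].

Definition covers (A : assignment) (tau : {set atom}) : bool :=
  [forall a in tau, atom_true A a].

Definition allowed (phi : form atom) (t : nat) (tau : {set atom}) : bool :=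
  is_ttuple t tau && [exists A : assignment, test_case phi A && covers A tau].

Definition Ta (phi : form atom) (t : nat) : {set {set atom}} :=
  [set tau | allowed phi t tau].

(* the same set, as a finite type (indexing the variables c^i_tau) *)
Definition ttup (phi : form atom) (t : nat) := {tau : {set atom} | allowed phi t tau}.
HB.instance Definition _ phi t :=
  Finite.copy (ttup phi t) {tau : {set atom} | allowed phi t tau}.

Definition n_covered (t N : nat) (L : {ffun 'I_N -> assignment}) : nat :=
  #|[set tau : {set atom} | is_ttuple t tau && [exists i, covers (L i) tau]]|.

Definition tuple_number (phi : form atom) (t N : nat) : nat :=
  \max_(L : {ffun 'I_N -> assignment} | [forall i, test_case phi (L i)])
     n_covered t L.

(* Variables of TPMSat_CCX: x_{i,p,v} and c^i_tau. Indices i are natural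
   numbers with the paper's ranges (i in [N] = 1..N for x, i in 0..N for c);
   only these occur in the instance. *)
Inductive ccx_var (phi : form atom) (t : nat) :=
  | xv of nat & atom
  | cv of nat & ttup phi t.

Definition TPMSat_CCX (phi : form atom) (t N : nat) : pmaxsat (ccx_var phi t) :=
  let X i a := @xv phi t i a in
  let C i tau := @cv phi t i tau in
  PMaxSat
    (
      [seq exactly_one [seq X i (Tagged D v) | v <- enum (D p)]
         | i <- iota 1 N, p <- enum P]
   ++
      [seq fmap (X i) phi | i <- iota 1 N]
   ++
      flatten [seq [seq FImp (FVar (C i tau)) (FOr (FVar (C i.-1 tau)) (FVar (X i a)))
                      | tau <- enum [set: ttup phi t], a <- enum (val tau)]
                 | i <- iota 1 N]
   ++
      [seq FImp (FVar (C N tau)) (FNot (FVar (C 0 tau)))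
         | tau <- enum [set: ttup phi t]])
    [seq (FVar (C N tau), 1) | tau <- enum [set: ttup phi t]].

End SUT.

(* Main.v *)
Require Import Defs.
From mathcomp Require Import all_boot zify.
Set Implicit Arguments. Unset Strict Implicit.

Lemma eval_bigAnd (A : Type) (v : A -> bool) s : eval v (bigAnd s) = all (eval v) s.
Proof. by elim: s => //= f s ->. Qed.

Lemma eval_bigOr (A : Type) (v : A -> bool) s : eval v (bigOr s) = has (eval v) s.
Proof. by elim: s => //= f s ->. Qed.

Lemma eval_exactly_one (A : Type) (v : A -> bool) s :
  eval v (exactly_one s) = has v s && eval v (at_most_one s).
Proof.
have -> : has v s = has (eval v) [seq FVar a | a <- s] by rewrite has_map.
by rewrite -eval_bigOr.
Qed.

Lemma eval_fmap (A B : Type) (s : A -> B) (v : B -> bool) f :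
  eval v (fmap s f) = eval (v \o s) f.
Proof. by elim: f => //= [g -> | g -> h -> | g -> h -> | g -> h ->]. Qed.

Lemma eval_ext (A : Type) (v w : A -> bool) f : v =1 w -> eval v f = eval w f.
Proof. by move=> e; elim: f => //= [g -> | g -> h -> | g -> h -> | g -> h ->]. Qed.


Lemma amo_uniq (A : eqType) (B : Type) (f : A -> B) (v : B -> bool) s :
  eval v (at_most_one (map f s)) -> {in s &, forall a b, v (f a) -> v (f b) -> a = b}.
Proof.
elim: s => // a s IH /andP [H1 H2] x y.
change (is_true (eval v (bigAnd [seq FNot (FAnd (FVar (f a)) (FVar b)) | b <- map f s])))
  in H1.
rewrite eval_bigAnd !all_map in H1; rewrite !inE => /orP [/eqP -> | xs] /orP [/eqP -> | ys] vx vy //.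
- have := allP H1 _ ys.
  by rewrite /= vx vy.
- have := allP H1 _ xs.
  by rewrite /= vx vy.
- exact: IH.
Qed.

Lemma uniq_amo (A : eqType) (B : Type) (f : A -> B) (v : B -> bool) s : uniq s ->
  {in s &, forall a b, v (f a) -> v (f b) -> a = b} -> eval v (at_most_one (map f s)).
Proof.
elim: s => // a s IH /andP [nas us] H.
change (is_true (eval v (bigAnd [seq FNot (FAnd (FVar (f a)) (FVar b)) | b <- map f s])
   && eval v (at_most_one (map f s)))).
apply/andP; split; last first.
  apply: IH => // x y xs ys; apply: H; rewrite inE ?xs ?ys orbT //.
rewrite eval_bigAnd !all_map; apply/allP => b bs /=.
apply/negP => /andP [va vb].
have bin : b \in a :: s by rewrite inE bs orbT.
have eab := H a b (mem_head _ _) bin va vb.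
by move: nas; rewrite eab bs.
Qed.

Lemma all_flatten (T : Type) (p : pred T) (ss : seq (seq T)) :
  all p (flatten ss) = all (all p) ss.
Proof. by elim: ss => //= s ss IH; rewrite all_cat IH. Qed.

Section Main.
Variables (P : finType) (D : P -> finType) (phi : form (atom D)) (t : nat).

Lemma card_ttup_pred (R : pred {set atom D}) :
  #|[pred u : ttup phi t | R (val u)]| = #|[set x | allowed phi t x && R x]|.
Proof.
rewrite -(card_imset _ val_inj); apply: eq_card => x; rewrite [RHS]inE.
apply/imsetP/idP.
  by move=> [u Ru ->]; rewrite (valP u) /=; move: Ru; rewrite inE.
move=> /andP [ax Rx]; exists (Sub x ax : ttup phi t) => //; by rewrite inE /= SubK.
Qed.

Lemma card_split (R : pred {set atom D}) :
  #|[pred u : ttup phi t | ~~ R (val u)]| =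
  #|Ta phi t| - #|[set x | allowed phi t x && R x]|.
Proof.
rewrite (card_ttup_pred (fun x => ~~ R x)).
have -> : [set x | allowed phi t x && ~~ R x] = Ta phi t :\: [set x | allowed phi t x && R x].
  by apply/setP => x; rewrite !inE; case: (allowed phi t x); case: (R x).
rewrite cardsD; congr (_ - _); apply: eq_card => x; rewrite !inE.
by case: (allowed phi t x).
Qed.

Lemma ncov_eq N (L : {ffun 'I_N -> assignment D}) :
  (forall i, test_case phi (L i)) ->
  n_covered t L = #|[set x | allowed phi t x && [exists i, covers (L i) x]]|.
Proof.
move=> tL; apply: eq_card => x; rewrite !inE /allowed.
case: (is_ttuple t x) => //=.
case E: [exists i, covers (L i) x]; rewrite ?andbF ?andbT //.
move/existsP: E => [i ci]; symmetry; apply/existsP; exists (L i); by rewrite tL ci.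
Qed.

Lemma soft_cost_eq N (val : ccx_var phi t -> bool) :
  soft_cost (TPMSat_CCX phi t N) val = #|[pred u : ttup phi t | ~~ val (cv N u)]|.
Proof.
rewrite /soft_cost /= big_map big_enum_cond /= sum1_card.
apply: eq_card => u; rewrite [in RHS]inE unfold_in /=; by rewrite in_setT.
Qed.


Definition hardP N (vl : ccx_var phi t -> bool) :=
 [/\ forall i p, 1 <= i <= N ->
       eval vl (exactly_one [seq xv phi t i (Tagged D v) | v <- enum (D p)]),
     forall i, 1 <= i <= N -> eval (fun a => vl (xv phi t i a)) phi,
     forall i (tau : ttup phi t) a, 1 <= i <= N -> a \in sval tau ->
       vl (cv i tau) -> vl (cv i.-1 tau) || vl (xv phi t i a)
   & forall tau, vl (cv N tau) -> ~~ vl (cv 0 tau)].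

Lemma sat_hardP N vl : sat_hard (TPMSat_CCX phi t N) vl <-> hardP N vl.
Proof.
rewrite /sat_hard /TPMSat_CCX; cbn [hard]; rewrite !all_cat.
split.
  case/and4P => HX HS Ha Hc.
  rewrite all_map in HS; rewrite all_flatten all_map in Ha; rewrite all_map in Hc; split.
  - move=> i p Hi; move/all_allpairsP: HX; apply => //.
      by rewrite mem_iota add1n ltnS.
    by rewrite mem_enum.
  - move=> i Hi; have := allP HS i; rewrite mem_iota add1n ltnS => /(_ Hi) /=.
    by rewrite eval_fmap.
  - move=> i tau a Hi Ha'; have := allP Ha i; rewrite mem_iota add1n ltnS => /(_ Hi) /=.
    move/all_allpairsP => /(_ tau a) /=; rewrite mem_enum in_setT mem_enum => /(_ isT Ha').
    by move/implyP.
  - move=> tau; have := allP Hc tau; rewrite mem_enum in_setT => /(_ isT) /=.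
    by move/implyP.
case=> HX HS Ha Hc; apply/and4P; split.
- apply/all_allpairsP => i p; rewrite mem_iota add1n ltnS => Hi _; exact: HX.
- rewrite all_map; apply/allP => i; rewrite mem_iota add1n ltnS => Hi /=; rewrite eval_fmap; exact: HS.
- rewrite all_flatten all_map; apply/allP => i; rewrite mem_iota add1n ltnS => Hi /=.
  apply/all_allpairsP => tau a _; rewrite mem_enum => Ha' /=.
  by apply/implyP; apply: Ha.
- rewrite all_map; apply/allP => tau _ /=; apply/implyP; exact: Hc.
Qed.

End Main.

Theorem proposition10 (P : finType) (D : P -> finType) (phi : form (atom D))
    (t N : nat) :
  (forall p : P, 0 < #|D p|) ->
  (exists A : assignment D, test_case phi A) ->
  1 <= t <= #|P| ->
  1 <= N ->
  is_opt_cost (TPMSat_CCX phi t N)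
              (#|Ta phi t| - tuple_number phi t N).
Proof.
move=> _ [A0 tA0] _; case: N => // n _.
split.
-
  have [Lo HLo Heq] := @eq_bigmax_cond _
     (fun L : {ffun 'I_n.+1 -> assignment D} => [forall i, test_case phi (L i)])
     (@n_covered P D t n.+1) (ltac:(apply/card_gt0P; exists [ffun _ => A0];
                          by rewrite unfold_in /=; apply/forallP => i; rewrite ffunE)).
  have tLo : forall i, test_case phi (Lo i) by apply/forallP; move: HLo; rewrite unfold_in.
  pose row (i : nat) := Lo (inord i.-1).
  pose vl (v : ccx_var phi t) := match v with
    | xv i a => atom_true (row i) a
    | cv i tau => [exists j : 'I_n.+1, (j < i) && covers (Lo j) (val tau)] end.
  exists vl; split.
  + apply/sat_hardP; split.
    * move=> i p Hi; rewrite eval_exactly_one; apply/andP; split.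
        rewrite has_map; apply/hasP; exists (row i p); first by rewrite mem_enum.
        by rewrite /= /atom_true /= eqxx.
      apply: uniq_amo; first exact: enum_uniq.
      by move=> v w _ _; rewrite /= /atom_true /= => /eqP <- /eqP <-.
    * move=> i Hi; exact: tLo.
    * move=> i tau a Hi Ha /existsP [j /andP [ji cj]] /=.
      case: (ltnP j i.-1) => h.
        by apply/orP; left; apply/existsP; exists j; rewrite h cj.
      have ej : inord i.-1 = j.
        apply: val_inj; rewrite /= inordK; last by move: Hi; clear; lia.
        by move: Hi h ji; clear; lia.
      by apply/orP; right; rewrite /row ej; move/forall_inP: cj; apply.
    * by move=> tau _ /=; apply/negP => /existsP [j]; done.
  + rewrite soft_cost_eq.
    have -> : #|[pred u : ttup phi t | ~~ vl (cv n.+1 u)]| =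
              #|[pred u : ttup phi t | ~~ [exists j, covers (Lo j) (val u)]]|.
      apply: eq_card => u; rewrite !inE /=; congr (~~ _); apply: eq_existsb => j.
      by rewrite ltn_ord.
    rewrite (@card_split _ _ phi t (fun x => [exists j, covers (Lo j) x])) -ncov_eq //.
    by rewrite /tuple_number Heq.
- move=> vl /sat_hardP [HX HS Ha Hc].
  pose Ai (i : nat) : assignment D := [ffun p : P =>
     (if [pick v | vl (xv phi t i (Tagged D v))] is Some v then v else A0 p : D p)].
  have key : forall i, 1 <= i <= n.+1 -> forall a, atom_true (Ai i) a = vl (xv phi t i a).
    move=> i Hi [p v]; rewrite /atom_true /= ffunE.
    have := HX i p Hi; rewrite eval_exactly_one has_map => /andP [/hasP [w _ vw] amo].
    have U := amo_uniq amo.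
    case: pickP => [w' vw' | none]; last by move: (none w) vw => /= ->.
    case: eqP => [<- | ne]; first by rewrite vw'.
    apply/esym/negP => vv; apply: ne; apply: U => //; by rewrite mem_enum.
  pose L : {ffun 'I_n.+1 -> assignment D} := [ffun j : 'I_n.+1 => Ai j.+1].
  have tL : forall j, test_case phi (L j).
    move=> j; have Hj : 1 <= j.+1 <= n.+1 by rewrite /= ltn_ord.
    rewrite /test_case ffunE (@eval_ext _ _ (fun a => vl (xv phi t j.+1 a))).
      exact: HS Hj.
    exact: key.
  have chain : forall i, i <= n.+1 -> forall tau, vl (cv i tau) ->
      vl (cv 0 tau) \/ exists j : 'I_n.+1, (j < i) && covers (L j) (val tau).
    elim=> [|i IH] Hi tau c; first by left.
    have Hi1 : 1 <= i.+1 <= n.+1 by [].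
    case ci : (vl (cv i tau)).
      case: (IH (ltnW Hi) tau ci) => [-> | [j /andP [ji cj]]]; first by left.
      by right; exists j; rewrite ltnS (ltnW ji) cj.
    right; exists (Ordinal Hi); rewrite /= ltnSn /=; apply/forall_inP => a Ha'.
    rewrite /L ffunE key //.
    by have := Ha i.+1 tau a Hi1 Ha' c; rewrite /= ci.
  rewrite soft_cost_eq.
  apply: (@leq_trans #|[pred u : ttup phi t | ~~ [exists j, covers (L j) (val u)]]|).
    rewrite (@card_split _ _ phi t (fun x => [exists j, covers (L j) x])) -ncov_eq //.
    apply: leq_sub2l; rewrite /tuple_number; apply: (leq_bigmax_cond L).
    by apply/forallP => j; exact: tL.
  apply: subset_leq_card; apply/subsetP => u; rewrite !inE; apply: contra => cN.
  case: (chain n.+1 (leqnn _) u cN) => [c0 | [j /andP [_ cj]]]; last by apply/existsP; exists j.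
  by move: (Hc u cN); rewrite c0.
Qed.
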